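(* Let $\Pi$ be an $\mathit{LP}^{\mathit{MLN}}$ program and let $\mathrm{trans}_2(\Pi)$ be the $\mathit{LP}^{\mathit{MLN}\pm}$ program whose hard formulas are $\{\alpha : F \vee \neg F \mid w : F \in \Pi\}$, whose soft integrity constraints are $\{w : \neg\neg F \mid w : F \in \Pi,\ w \neq \alpha\}$, and whose weak constraints are $\{:\sim F\,[-1,1] \mid w : F \in \Pi,\ w = \alpha\}$. Then for every interpretation $X$, $P_\Pi(X) = P^{\pm}_{\mathrm{trans}_2(\Pi)}(X)$.
   Context: Fix a finite set of propositional atoms; an interpretation is a set $X$ of atoms. For a set $\Gamma$ of propositional formulas, the reduct $\Gamma^X$ is obtained by replacing every maximal subformula of each formula of $\Gamma$ not satisfied by $X$ by $\bot$; $X$ is a stable model of $\Gamma$ if $X$ is a minimal model of $\Gamma^X$ (Ferraris' semantics). $\mathrm{SM}(\Gamma)$ is the set of stable models of $\Gamma$. A weak constraint has the form $:\sim F\,[w,l]$ with $F$ a formula, $w$ a real number and $l$ a nonnegative integer (the level). For a set $\Gamma_1$ of formulas and a set $\Gamma_2$ of weak constraints, the cost of $X$ at level $l$ is $\mathrm{cost}_l(X)=\sum\{w \mid :\sim F[w,l]\in\Gamma_2,\ X\models F\}$; the optimal stable models of $\Gamma_1\cup\Gamma_2$ are those $X\in\mathrm{SM}(\Gamma_1)$ for which there is no $Y\in\mathrm{SM}(\Gamma_1)$ and level $l$ with $\mathrm{cost}_l(Y)<\mathrm{cost}_l(X)$ and $\mathrm{cost}_{l'}(Y)=\mathrm{cost}_{l'}(X)$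 for all $l'>l$. An $\mathit{LP}^{\mathit{MLN}}$ program $\Pi$ is a finite set of weighted formulas $w:F$, $F$ a propositional formula, $w$ a real number (soft) or $\alpha$ (hard, infinite weight). For a set $\Sigma$ of weighted formulas, $\overline{\Sigma}$ drops the weights, $\Sigma_X=\{w:F\in\Sigma \mid X\models F\}$, and $\mathrm{TW}(\Sigma)=\exp(\sum_{w:F\in\Sigma} w)$ (with $\alpha$ treated as a real parameter). $\mathrm{SSM}(\Pi)=\{X \mid X$ is a stable model of $\overline{\Pi_X}\}$; $W_\Pi(X)=\mathrm{TW}(\Pi_X)$ if $X\in\mathrm{SSM}(\Pi)$ and $0$ otherwise; and $P_\Pi(X)=\lim_{\alpha\to\infty} W_\Pi(X)/\sum_{Y\in\mathrm{SSM}(\Pi)}W_\Pi(Y)$. An $\mathit{LP}^{\mathit{MLN}\pm}$ program $\Pi'$ is a set consisting of hard formulas $\alpha:F$ (set $\mathrm{hard}(\Pi')$), soft integrity constraints $w:\neg F$ with $w$ real (set $\mathrm{soft}(\Pi')$), and weak constraints (set $\mathrm{weak}(\Pi')$). $\mathrm{OSM}(\Pi')$ is the set of optimal stable models of $\overline{\mathrm{hard}(\Pi')}\cup\mathrm{weak}(\Pi')$. $W^{\pm}_{\Pi'}(X)=\mathrm{TW}(\mathrm{soft}(\Pi')_X)$ if $X\in\mathrm{OSM}(\Pi')$ and $0$ otherwise, and $P^{\pm}_{\Pi'}(X)=W^{\pm}_{\Pi'}(X)/\sum_{Y\in\mathrm{OSM}(\Pi')}W^{\pm}_{\Pi'}(Y)$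 (undefined if $\mathrm{OSM}(\Pi')$ is empty). *)

(* Defs.v *)
From HB Require Import structures.
From mathcomp Require Import all_boot all_order all_algebra.
From mathcomp Require Import boolp classical_sets reals topology normedtype sequences.
Set Implicit Arguments. Unset Strict Implicit. Unset Printing Implicit Defensive.
Import Order.TTheory GRing.Theory Num.Theory.
Local Open Scope ring_scope.

Inductive form (A : Type) : Type :=
| Atom of A
| Bot
| And of form A & form A
| Or of form A & form A
| Imp of form A & form A.
Arguments Bot {A}.

Definition Neg (A : Type) (F : form A) : form A := Imp F Bot.

Section Semantics.
Variable A : finType.

Fixpoint sat (X : {set A}) (F : form A) : bool :=
  match F with
  | Atom a => a \in X
  | Bot => false
  | And G H => sat X G && sat X H
  | Or G H => sat X G || sat X H
  | Imp G H => sat X G ==> sat X H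
  end.

Definition models (X : {set A}) (G : seq (form A)) : bool := all (sat X) G.

Fixpoint reduct (X : {set A}) (F : form A) : form A :=
  if ~~ sat X F then Bot else
  match F with
  | Atom a => Atom a
  | Bot => Bot
  | And G H => And (reduct X G) (reduct X H)
  | Or G H => Or (reduct X G) (reduct X H)
  | Imp G H => Imp (reduct X G) (reduct X H)
  end.

Definition reductS (X : {set A}) (G : seq (form A)) : seq (form A) :=
  [seq reduct X F | F <- G].

Definition stable (G : seq (form A)) (X : {set A}) : bool :=
  models X (reductS X G) &&
  [forall Y : {set A}, (Y \proper X) ==> ~~ models Y (reductS X G)].

End Semantics.

Section Programs.
Variable R : realType.
Variable A : finType.

(** Weights of LP^MLN rules: a real number (soft) or alpha (hard). *)
Inductive weight : Type := Soft of R | Hard.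

Definition wval (alpha : R) (w : weight) : R :=
  match w with Soft r => r | Hard => alpha end.

Definition lpmln := seq (weight * form A).

Definition satPart (Pi : lpmln) (X : {set A}) : lpmln :=
  [seq p <- Pi | sat X p.2].

Definition TW (alpha : R) (S : lpmln) : R :=
  expR (\sum_(p <- S) wval alpha p.1).

Definition SSM (Pi : lpmln) (X : {set A}) : bool :=
  stable [seq p.2 | p <- satPart Pi X] X.

Definition W_lpmln (alpha : R) (Pi : lpmln) (X : {set A}) : R :=
  if SSM Pi X then TW alpha (satPart Pi X) else 0.

(** The normalized weight W_Pi(X) / sum_{Y in SSM(Pi)} W_Pi(Y) as a function
    of alpha; P_Pi(X) is its limit as alpha -> +oo. *)
Definition ratio_lpmln (Pi : lpmln) (X : {set A}) (alpha : R) : R :=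
  W_lpmln alpha Pi X / \sum_(Y : {set A}) W_lpmln alpha Pi Y.

(** LP^MLN+- programs: hard formulas, soft integrity constraints (w : F),
    weak constraints  :~ F [w, l]. *)
Record lpmlnpm := LPMLNpm {
  hardF : seq (form A);
  softF : seq (R * form A);
  weakF : seq (form A * R * nat)
}.

Definition cost (P : lpmlnpm) (l : nat) (X : {set A}) : R :=
  \sum_(c <- weakF P | (c.2 == l) && sat X c.1.1) c.1.2.

Definition OSM (P : lpmlnpm) (X : {set A}) : Prop :=
  stable (hardF P) X /\
  ~ (exists (Y : {set A}) (l : nat),
        stable (hardF P) Y /\ cost P l Y < cost P l X /\
        forall l' : nat, (l < l')%N -> cost P l' Y = cost P l' X).

Definition W_pm (P : lpmlnpm) (X : {set A}) : R :=
  if `[< OSM P X >] then expR (\sum_(p <- softF P | sat X p.2) p.1) else 0.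

Definition P_pm (P : lpmlnpm) (X : {set A}) : R :=
  W_pm P X / \sum_(Y : {set A}) W_pm P Y.

Definition trans2 (Pi : lpmln) : lpmlnpm :=
  {| hardF := [seq Or p.2 (Neg p.2) | p <- Pi];
     softF := flatten [seq (match p.1 with
                            | Soft w => [:: (w, Neg (Neg p.2))]
                            | Hard => [::] end) | p <- Pi];
     weakF := flatten [seq (match p.1 with
                            | Soft _ => [::]
                            | Hard => [:: (p.2, -1, 1%N)] end) | p <- Pi] |}.

End Programs.

(* Main.v *)
Require Import Defs.
From HB Require Import structures.
From mathcomp Require Import all_boot all_order all_algebra.
From mathcomp Require Import boolp classical_sets reals topology normedtype sequences.
From mathcomp Require Import exp.
From mathcomp Require Import ring lra.
Import numFieldNormedType.Exports.
Set Implicit Arguments. Unset Strict Implicit. Unset Printing Implicit Defensive.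
Import Order.TTheory GRing.Theory Num.Theory.
Local Open Scope ring_scope.
Local Open Scope classical_set_scope.

Definition sw (R : realType) (w : weight R) : R := if w is Soft r then r else 0.
Definition hw (R : realType) (w : weight R) : nat := if w is Hard then 1%N else 0%N.
Definition sS (R : realType) (A : finType) (Pi : lpmln R A) (X : {set A}) : R :=
  \sum_(p <- Pi | sat X p.2) sw p.1.
Definition hS (R : realType) (A : finType) (Pi : lpmln R A) (X : {set A}) : nat :=
  (\sum_(p <- Pi | sat X p.2) hw p.1)%N.

Lemma reduct_unsat (A : finType) (X : {set A}) (F : Defs.form A) :
  ~~ sat X F -> reduct X F = Bot.
Proof. by case: F => [a||G H|G H|G H] /= Hn //; by rewrite Hn. Qed.

Lemma sum_satPart (R : realType) (A : finType) (Pi : lpmln R A) X alpha :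
  \sum_(p <- satPart Pi X) wval alpha p.1 = sS Pi X + alpha * (hS Pi X)%:R.
Proof.
rewrite /satPart big_filter /sS /hS.
elim: Pi => [|[w F] Pi IH]; first by rewrite !big_nil mulr0 addr0.
rewrite !big_cons /=; case: (sat X F) => //; rewrite IH.
case: w => [r|] /=; rewrite ?natrD /=; ring.
Qed.

Lemma soft_sum (R : realType) (A : finType) (Pi : lpmln R A) X :
  \sum_(p <- softF (trans2 Pi) | sat X p.2) p.1 = sS Pi X.
Proof.
rewrite /sS /=.
elim: Pi => [|[w F] Pi IH]; first by rewrite !big_nil.
rewrite /= big_cat big_cons.
case: w => [r|] /=; rewrite IH ?big_cons big_nil /=;
  by case: (sat X F) => /=; rewrite ?addr0 ?add0r.
Qed.

Lemma cost_eq (R : realType) (A : finType) (Pi : lpmln R A) l Y :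
  cost (trans2 Pi) l Y = if l == 1%N then - (hS Pi Y)%:R else 0.
Proof.
rewrite /cost /hS /=.
elim: Pi => [|[w F] Pi IH]; first by rewrite !big_nil; case: ifP => //; rewrite oppr0.
rewrite /= big_cat big_cons.
case: w => [r|] /=; rewrite IH ?big_cons big_nil /= ?(eq_sym 1%N l);
  case: (sat Y F); case: (l == 1%N); rewrite /= ?add0r ?addr0 ?natrD //; ring.
Qed.

Lemma models_hard (R : realType) (A : finType) (Pi : lpmln R A) X Y :
  models Y (reductS X (hardF (trans2 Pi))) =
  models Y (reductS X [seq p.2 | p <- satPart Pi X]).
Proof.
rewrite /models /reductS /satPart /=.
elim: Pi => [|[w F] Pi IH] //=.
case hF: (sat X F) => /=.
  by rewrite orbF IH.
rewrite (reduct_unsat (negbT hF)) /= IH.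
by [].
Qed.

Lemma stable_hard (R : realType) (A : finType) (Pi : lpmln R A) X :
  stable (hardF (trans2 Pi)) X = SSM Pi X.
Proof.
rewrite /SSM /stable models_hard; congr andb; apply: eq_forallb => Y.
by rewrite models_hard.
Qed.

Definition mh (R : realType) (A : finType) (Pi : lpmln R A) : nat :=
  (\max_(Y | SSM Pi Y) hS Pi Y)%N.

Lemma OSM_iff (R : realType) (A : finType) (Pi : lpmln R A) Y :
  OSM (trans2 Pi) Y <-> (SSM Pi Y && (hS Pi Y == mh Pi)).
Proof.
split.
  move=> [st nex]; rewrite -stable_hard st /=.
  have sY : SSM Pi Y by rewrite -stable_hard.
  rewrite eqn_leq; apply/andP; split; first exact: (leq_bigmax_cond (F := hS Pi) Y sY).
  apply/bigmax_leqP => Z sZ; rewrite leqNgt; apply/negP => lt.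
  apply: nex; exists Z, 1%N; split; first by rewrite stable_hard.
  rewrite !cost_eq /=; split; first by rewrite ltrN2 ltr_nat.
  move=> l' hl; rewrite !cost_eq.
by have /negPf -> : l' != 1%N by rewrite neq_ltn hl orbT.
move=> /andP[sY /eqP hY]; split; first by rewrite stable_hard.
move=> [Z [l [st [lt _]]]]; move: lt; rewrite !cost_eq.
case: (l == 1%N); last by rewrite ltxx.
rewrite ltrN2 ltr_nat hY ltnNge.
have sZ : SSM Pi Z by rewrite -stable_hard.
by have -> : (hS Pi Z <= mh Pi)%N by exact: (leq_bigmax_cond (F := hS Pi) Z sZ).
Qed.

Lemma cvg_pow (R : realType) (f : R -> R) (l : R) (d : nat) :
  f @ +oo --> l -> (fun x => f x ^+ d) @ +oo --> l ^+ d.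
Proof.
move=> hf; elim: d => [|d IH].
  rewrite expr0; under eq_fun do rewrite expr0; exact: cvg_cst.
rewrite exprS; under eq_fun do rewrite exprS.
exact: cvgM.
Qed.

Lemma cvg_bigsum (R : realType) (I : Type) (s : seq I) (f : I -> R -> R) (l : I -> R) :
  (forall i, f i @ +oo --> l i) ->
  (fun x => \sum_(i <- s) f i x) @ +oo --> \sum_(i <- s) l i.
Proof.
move=> hf; elim: s => [|i s IH].
  rewrite big_nil; under eq_fun do rewrite big_nil; exact: cvg_cst.
rewrite big_cons; under eq_fun do rewrite big_cons.
exact: cvgD.
Qed.

Theorem proposition2 (R : realType) (A : finType) (Pi : lpmln R A) (X : {set A}) :
  ratio_lpmln Pi X @ +oo --> P_pm (trans2 Pi) X.
Proof.
set m := mh Pi.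
pose g (Y : {set A}) (a : R) :=
  if SSM Pi Y then expR (sS Pi Y + a * ((hS Pi Y)%:R - m%:R)) else 0.
pose gl (Y : {set A}) :=
  if SSM Pi Y && (hS Pi Y == m) then expR (sS Pi Y) else 0.
have c1 Y a : W_lpmln a Pi Y = g Y a * expR (a * m%:R).
  rewrite /W_lpmln /TW sum_satPart /g; case: (SSM Pi Y); last by rewrite mul0r.
  rewrite -expRD; congr expR; ring.
have c2 : ratio_lpmln Pi X = fun a => g X a * (\sum_Y g Y a)^-1.
  apply: funext => a; rewrite /ratio_lpmln.
  under eq_bigr do rewrite c1.
  rewrite c1 -big_distrl /= -mulf_div divff ?mulr1 //.
  by rewrite gt_eqF // expR_gt0.
have c3 Y : W_pm (trans2 Pi) Y = gl Y.
  by rewrite /W_pm soft_sum (propext (OSM_iff Pi Y)) asboolb.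
have c4 Y : g Y @ +oo --> gl Y.
  rewrite /g /gl; case sY: (SSM Pi Y) => /=; last exact: cvg_cst.
  have hle : (hS Pi Y <= m)%N by exact: (leq_bigmax_cond (F := hS Pi) Y sY).
  case: eqP => [->|ne].
    under eq_fun do rewrite subrr mulr0 addr0.
    exact: cvg_cst.
  have lt : (hS Pi Y < m)%N by rewrite ltn_neqAle hle andbT; apply/eqP.
  set d := (m - hS Pi Y)%N.
  have -> : (fun a => expR (sS Pi Y + a * ((hS Pi Y)%:R - m%:R))) =
            (fun a => expR (sS Pi Y) * expR (- a) ^+ d).
    apply: funext => a; rewrite expRD -expRM_natl; congr (_ * expR _).
    rewrite /d natrB ?(ltnW lt) //; ring.
  have -> : (0 : R) = expR (sS Pi Y) * 0 ^+ d by rewrite expr0n subn_eq0 leqNgt lt mulr0.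
  apply: cvgMl_tmp; apply: cvg_pow; exact: cvgr_expR.
rewrite c2 /P_pm c3.
under eq_bigr do rewrite c3.
case sX: (SSM Pi X); last first.
  have -> : (fun a => g X a * (\sum_Y g Y a)^-1) = fun=> 0.
    by apply: funext => a; rewrite /g sX mul0r.
  by rewrite /gl sX /= mul0r; exact: cvg_cst.
have [Y0 sY0 hY0] : {Y0 | SSM Pi Y0 & m = hS Pi Y0}.
  have [|Y0 sY0 h] := @eq_bigmax_cond _ (SSM Pi) (hS Pi).
    by apply/card_gt0P; exists X.
  by exists Y0; [exact: sY0 | exact: h].
have pos : 0 < \sum_Y gl Y.
  rewrite (bigD1 Y0) //= ltr_pwDl //.
    by rewrite /gl sY0 -hY0 eqxx /= expR_gt0.
  apply: sumr_ge0 => Y _; rewrite /gl; case: ifP => // _; exact: expR_ge0.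
apply: cvgM; first exact: c4.
apply: cvgV; first by rewrite gt_eqF.
exact: cvg_bigsum.
Qed.
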